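(* Assume $N,L\to\infty$ with $N/L\to0$, $d=d(L)\to0$, $dL\to\infty$ and $N/(dL)\to\gamma\in[0,\infty)$. Then for every $n\in\mathbb N$, $$\lim\ \pi_{L,N}[\tilde\eta_1=n]=\frac{\gamma^{n-1}}{(1+\gamma)^n},$$ i.e. the law of $\tilde\eta_1$ under $\pi_{L,N}$ converges to the geometric distribution on $\{1,2,\dots\}$ with success parameter $\frac1{1+\gamma}$ (for $\gamma=0$, the point mass at $1$).
   Context: Inclusion process: $\Omega_{L,N}=\{\eta\in\mathbb N_0^L:\sum_x\eta_x=N\}$, generator $\mathfrak L_{L,N}f(\eta)=\sum_{x\ne y}\eta_x(d+\eta_y)[f(\eta^{x,y})-f(\eta)]$, $\eta^{x,y}=\eta-e^x+e^y$. For $d>0$ its unique invariant distribution is $\pi_{L,N}[\eta]=\frac1{Z_{L,N}}\prod_{x=1}^Lw_L(\eta_x)$ with $w_L(n)=\frac{\Gamma(n+d)}{n!\,\Gamma(d)}$ and $Z_{L,N}=\frac{\Gamma(N+dL)}{N!\,\Gamma(dL)}$. Size-biased marginal: given $\eta$, choose a site $x$ with probability $\eta_x/N$ and set $\tilde\eta_1=\eta_x$; $\pi_{L,N}[\tilde\eta_1=n]$ denotes the probability of this event when $\eta\sim\pi_{L,N}$, i.e. $\pi_{L,N}[\tilde\eta_1=n]=\frac LNn\,w_L(n)\frac{Z_{L-1,N-n}}{Z_{L,N}}$. *)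

(* Defs.v *)
From HB Require Import structures.
From mathcomp Require Import all_boot all_order all_algebra.
From mathcomp Require Import all_classical all_reals all_analysis.
Set Implicit Arguments. Unset Strict Implicit. Unset Printing Implicit Defensive.
Import Order.TTheory GRing.Theory Num.Theory.
Local Open Scope ring_scope.

(* rising factorial: x (x+1) ... (x+n-1) = Gamma(x+n)/Gamma(x) for x > 0 *)
Definition rising {R : realType} (x : R) (n : nat) : R :=
  \prod_(i < n) (x + i%:R).

(* w_L(n) = Gamma(n+d) / (n! Gamma(d)) *)
Definition wIP {R : realType} (d : R) (n : nat) : R := rising d n / (n`!)%:R.

(* Z_{L,N} = Gamma(N + dL) / (N! Gamma(dL)) *)
Definition ZIP {R : realType} (d : R) (L N : nat) : R :=
  rising (d * L%:R) N / (N`!)%:R.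

(* pi_{L,N}[tilde eta_1 = n] = (L/N) n w_L(n) Z_{L-1,N-n} / Z_{L,N}
   (this probability is 0 when n > N) *)
Definition sbIP {R : realType} (d : R) (L N n : nat) : R :=
  if (n <= N)%N then
    (L%:R / N%:R) * n%:R * wIP d n * ZIP d (L.-1) (N - n) / ZIP d L N
  else 0.

(* Main.v *)
Require Import Defs.
From HB Require Import structures.
From mathcomp Require Import all_boot all_order all_algebra.
From mathcomp Require Import all_classical all_reals all_analysis.
From mathcomp Require Import ring lra.
Import Order.TTheory GRing.Theory Num.Theory.
Import numFieldNormedType.Exports.
Local Open Scope classical_set_scope.
Local Open Scope ring_scope.

Section Alg.
Variable R : realType.

Lemma rising_add (x : R) m n :
  rising x (m + n) = rising x m * \prod_(i < n) (x + (m + i)%:R).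
Proof. by rewrite /rising big_split_ord. Qed.

Lemma fact_add m n :
  ((m + n)`!)%:R = (m`!)%:R * \prod_(i < n) ((m + i)%:R + 1) :> R.
Proof.
elim: n => [|n IH]; first by rewrite addn0 big_ord0 mulr1.
rewrite addnS factS natrM IH big_ord_recr /=.
rewrite -natr1; ring.
Qed.

Lemma rising_S (x : R) n :
  rising x n.+1 = x * \prod_(i < n) (x + i%:R + 1).
Proof.
rewrite /rising big_ord_recl /= addr0; congr (_ * _).
by apply: eq_bigr => i _; rewrite /bump /= add1n -natr1 addrA.
Qed.

Lemma rising_shift (D d : R) m : 0 < D ->
  rising (D - d) m = rising D m * \prod_(i < m) (1 - d / (D + i%:R)).
Proof.
move=> D0; rewrite /rising -big_split /=; apply: eq_bigr => i _.
have h : D + i%:R != 0 by rewrite gt_eqF // ltr_wpDr.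
by field.
Qed.

Lemma weier m (x : nat -> R) : (forall i, 0 <= x i <= 1) ->
  1 - \sum_(i < m) x i <= \prod_(i < m) (1 - x i) <= 1.
Proof.
move=> hx; elim: m => [|m IH]; first by rewrite big_ord0 big_ord0 subr0 lexx.
rewrite big_ord_recr big_ord_recr /=.
have /andP[h1 h2] := hx m.
have S0 : 0 <= \sum_(i < m) x i by apply: sumr_ge0 => i _; case/andP: (hx i).
have P0 : 0 <= \prod_(i < m) (1 - x i).
  by apply: prodr_ge0 => i _; case/andP: (hx i) => _ ?; rewrite subr_ge0.
case/andP: IH => I1 I2.
apply/andP; split; nra.
Qed.

End Alg.
Lemma ident (R : realType) (d : R) (L N n' : nat) : 0 < d -> (1 <= L)%N -> (n'.+1 <= N)%N ->
 sbIP d L N n'.+1 = (d * L%:R) / (d * L%:R + N%:R - 1)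
   * (\prod_(i < n') (d + i%:R + 1) / (n'`!)%:R)
   * \prod_(i < N - n'.+1) (1 - d / (d * L%:R + i%:R))
   * \prod_(i < n') ((N%:R - n'.+1%:R + i%:R + 1) / (d * L%:R + N%:R - n'.+1%:R + i%:R)).
Proof.
move=> d0 L1 nN.
have [M ->] : exists M, N = (M + n'.+1)%N by exists (N - n'.+1)%N; rewrite subnK.
have D0 : 0 < d * L%:R by rewrite mulr_gt0 // ltr0n.
rewrite /sbIP leq_addl addnK /wIP /ZIP.
have -> : (L.-1)%:R = L%:R - 1 :> R by rewrite -subn1 natrB.
rewrite mulrBr mulr1 rising_shift // rising_add fact_add rising_S factS natrM.
rewrite !big_ord_recr /= prodf_div.
have -> : \prod_(i < n') ((M + n'.+1)%:R - n'.+1%:R + i%:R + 1) = \prod_(i < n') ((M + i)%:R + 1) :> R.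
  by apply: eq_bigr => i _; rewrite !natrD; ring.
have -> : \prod_(i < n') (d * L%:R + (M + n'.+1)%:R - n'.+1%:R + i%:R) = \prod_(i < n') (d * L%:R + (M + i)%:R) :> R.
  by apply: eq_bigr => i _; rewrite !natrD; ring.
set D := d * L%:R.
set Q := \prod_(i < n') (d + i%:R + 1).
set P := \prod_(i < M) _.
set A := \prod_(i < n') ((M + i)%:R + 1).
set B := \prod_(i < n') (D + (M + i)%:R).
set RD := rising D M.
rewrite !natrD -!natr1 /D.
have n0 : (0:R) <= n'%:R by [].
have m0 : (0:R) <= M%:R by [].
have hB : 0 < B by apply: prodr_gt0 => i _; rewrite /D ltr_wpDr.
have hA : 0 < A by apply: prodr_gt0 => i _; rewrite ltr_wpDl.
have hR : 0 < RD by apply: prodr_gt0 => i _; rewrite /D ltr_wpDr.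
have hf1 : (0:R) < n'`!%:R by rewrite ltr0n fact_gt0.
have hf2 : (0:R) < M`!%:R by rewrite ltr0n fact_gt0.
field.
rewrite !gt_eqF //; lra.
Qed.
Lemma cvg_prodn (R : realType) (f : nat -> nat -> R) (l : nat -> R) m :
  (forall i, f i @ \oo --> l i) ->
  (fun k => \prod_(i < m) f i k) @ \oo --> \prod_(i < m) l i.
Proof.
move=> hf; elim: m => [|m IH].
  under eq_cvg do rewrite big_ord0.
  by rewrite big_ord0; exact: cvg_cst.
under eq_cvg do rewrite big_ord_recr.
by rewrite big_ord_recr; apply: cvgM.
Qed.

Lemma divD (R : realType) (x y z : R) : z != 0 -> (x / z) / (y / z) = x / y.
Proof. by move=> hz; rewrite invf_div mulrA divfK. Qed.

Lemma ratio_cvg (R : realType) (u v D : nat -> R) (a b : R) : b != 0 ->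
  (\forall k \near \oo, D k != 0) ->
  (fun k => u k / D k) @ \oo --> a -> (fun k => v k / D k) @ \oo --> b ->
  (fun k => u k / v k) @ \oo --> a / b.
Proof.
move=> b0 hD hu hv.
apply: cvg_trans (near_eq_cvg _) _; last first.
  by apply: cvgM hu (cvgV b0 hv).
by near=> k; rewrite /= divD //; near: k.
Unshelve. all: by end_near. Qed.

Lemma selfdiv (R : realType) (D : nat -> R) :
  (\forall k \near \oo, D k != 0) -> (fun k => D k / D k) @ \oo --> (1 : R).
Proof.
move=> hD; apply: cvg_trans (near_eq_cvg _) _; last exact: (cvg_cst (1:R)).
by near=> k; rewrite /= divff //; near: k.
Unshelve. all: by end_near. Qed.

Theorem lemma4p1 (R : realType) (L N : nat -> nat) (d : nat -> R) (gamma : R) :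
  (forall k, 0 < d k) ->
  (fun k => (L k)%:R : R) @ \oo --> +oo ->
  (fun k => (N k)%:R : R) @ \oo --> +oo ->
  (fun k => (N k)%:R / (L k)%:R : R) @ \oo --> 0 ->
  d @ \oo --> 0 ->
  (fun k => d k * (L k)%:R) @ \oo --> +oo ->
  0 <= gamma ->
  (fun k => (N k)%:R / (d k * (L k)%:R)) @ \oo --> gamma ->
  forall n : nat, (0 < n)%N ->
    (fun k => sbIP (d k) (L k) (N k) n) @ \oo
      --> gamma ^+ n.-1 / (1 + gamma) ^+ n.
Proof.
move=> dpos Lc Nc NLc dc DLc g0 NDc n n0.
case: n n0 => // n' _.
have hL : \forall k \near \oo, (1 <= L k)%N.
  by move/cvgryPge: Lc => /(_ 1); apply: filterS => k; rewrite ler1n.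
have hN : \forall k \near \oo, (n'.+1 <= N k)%N.
  by move/cvgryPge: Nc => /(_ n'.+1%:R); apply: filterS => k; rewrite ler_nat.
have hD : \forall k \near \oo, 0 < d k * (L k)%:R.
  by move/cvgryPgt: DLc => /(_ 0).
have hD0 : \forall k \near \oo, d k * (L k)%:R != 0.
  by apply: filterS hD => k h; rewrite gt_eqF.
have iD : (fun k => (d k * (L k)%:R)^-1) @ \oo --> 0.
  by apply/gtr0_cvgV0.
have cD : forall c : R, (fun k => c / (d k * (L k)%:R)) @ \oo --> 0.
  by move=> c; rewrite -(mulr0 c); exact: cvgMl_tmp iD.
have g1 : 1 + gamma != 0 by rewrite gt_eqF //; lra.
have R1 : forall c1 c2 : R, (fun k => ((N k)%:R + c1) / (d k * (L k)%:R + (N k)%:R + c2))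
   @ \oo --> gamma / (1 + gamma).
  move=> c1 c2; apply: (@ratio_cvg R (fun k => (N k)%:R + c1) (fun k => d k * (L k)%:R + (N k)%:R + c2) (fun k => d k * (L k)%:R) _ _ g1 hD0).
    under eq_cvg do rewrite mulrDl.
    by rewrite -[gamma]addr0; apply: cvgD NDc (cD c1).
  under eq_cvg do rewrite !mulrDl.
  rewrite -[1 + gamma]addr0; apply: cvgD; [apply: cvgD; [exact: selfdiv | exact: NDc] | exact: cD].
have R2 : forall c : R, (fun k => (d k * (L k)%:R) / (d k * (L k)%:R + (N k)%:R + c))
   @ \oo --> 1 / (1 + gamma).
  move=> c; apply: (@ratio_cvg R (fun k => d k * (L k)%:R) (fun k => d k * (L k)%:R + (N k)%:R + c) (fun k => d k * (L k)%:R) _ _ g1 hD0); first exact: selfdiv.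
  under eq_cvg do rewrite !mulrDl.
  rewrite -[1 + gamma]addr0; apply: cvgD; [apply: cvgD; [exact: selfdiv | exact: NDc] | exact: cD].
have F : (n'`!)%:R = \prod_(i < n') (i%:R + 1) :> R.
  have := fact_add R 0 n'; rewrite add0n fact0 mul1r => ->.
  by apply: eq_bigr => i _; rewrite add0n.
pose g := fun k => (d k * (L k)%:R) / (d k * (L k)%:R + (N k)%:R - 1)
   * (\prod_(i < n') (d k + i%:R + 1) / (n'`!)%:R)
   * \prod_(i < N k - n'.+1) (1 - d k / (d k * (L k)%:R + i%:R))
   * \prod_(i < n') (((N k)%:R - n'.+1%:R + i%:R + 1) / (d k * (L k)%:R + (N k)%:R - n'.+1%:R + i%:R)).
apply: cvg_trans (near_eq_cvg (f := g) _) _.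
  near=> k; rewrite /g ident //; near: k; [exact: hL | exact: hN].
have -> : gamma ^+ n'.+1.-1 / (1 + gamma) ^+ n'.+1
   = 1 / (1 + gamma) * 1 * 1 * \prod_(i < n') (gamma / (1 + gamma)).
  rewrite prodr_const card_ord /= expr_div_n exprS; field.
  by rewrite expf_neq0.
apply: cvgM; [apply: cvgM; [apply: cvgM|]|].
- exact: R2.
- have E1 : \prod_(i < n') (i%:R + 1) / (n'`!)%:R = 1 :> R.
    by rewrite -F divff // pnatr_eq0 -lt0n fact_gt0.
  rewrite -[X in _ --> X]E1; apply: cvgMr_tmp.
  apply: (@cvg_prodn R (fun i k => d k + i%:R + 1) (fun i => i%:R + 1)).
  move=> i; have := cvgD (cvgD dc (cvg_cst (i%:R : R))) (cvg_cst (1:R)).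
  by rewrite add0r; apply; apply: eventually_filter.
- apply: (@squeeze_cvgr _ _ _ _ (fun k => 1 - (N k)%:R / (L k)%:R) (fun k => 1)); last first.
  + exact: cvg_cst.
  + by rewrite -[X in _ --> X]subr0; apply: cvgB (cvg_cst _) NLc.
  near=> k.
  have Lk : (1 <= L k)%N by near: k; exact: hL.
  have Lk' : (1 : R) <= (L k)%:R by rewrite ler1n.
  have Lp : (0 : R) < (L k)%:R by lra.
  have dk := dpos k.
  have hx : forall i : nat, 0 <= d k / (d k * (L k)%:R + i%:R) <= 1.
    move=> i; have Di : 0 < d k * (L k)%:R + i%:R by rewrite ltr_wpDr // mulr_gt0.
    rewrite divr_ge0 ?(ltW dk) ?(ltW Di) //= ler_pdivrMr // mul1r.
    by rewrite ler_wpDr //; nra.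
  have /andP[w1 w2] := weier R (N k - n'.+1) (fun i => d k / (d k * (L k)%:R + i%:R)) hx.
  apply/andP; split => //.
  apply: le_trans w1; rewrite lerD2l lerN2.
  apply: (@le_trans _ _ (\sum_(i < N k - n'.+1) (L k)%:R^-1)).
    apply: ler_sum => i _.
    have Di : 0 < d k * (L k)%:R + i%:R by rewrite ltr_wpDr // mulr_gt0.
    rewrite ler_pdivrMr // mulrDr (mulrC (d k)) mulrA mulVf ?gt_eqF // mul1r.
    by rewrite lerDl mulr_ge0 // invr_ge0 ltW.
  rewrite sumr_const card_ord -[X in X <= _]mulr_natl; apply: ler_wpM2r; first by rewrite invr_ge0 ltW.
  by rewrite ler_nat leq_subr.
- apply: (@cvg_prodn R (fun i k => ((N k)%:R - n'.+1%:R + i%:R + 1) /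
      (d k * (L k)%:R + (N k)%:R - n'.+1%:R + i%:R)) (fun=> gamma / (1 + gamma)) n').
  move=> i.
  have -> : (fun k => ((N k)%:R - n'.+1%:R + i%:R + 1) /
      (d k * (L k)%:R + (N k)%:R - n'.+1%:R + i%:R)) =
     (fun k => ((N k)%:R + (i%:R + 1 - n'.+1%:R)) /
      (d k * (L k)%:R + (N k)%:R + (i%:R - n'.+1%:R))).
    by apply: funext => k; congr (_ / _); ring.
  exact: R1.
Unshelve. all: by end_near. Qed.
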